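(* Let $d\ge1$, let $E\subset\mathbb{Z}^n$ be a (possibly infinite) $d$-sparse subset, and let $M$ be a paving matroid of rank $d+1$ on the ground set $E$. Then there exists a paving tropical ideal $I\subset\mathbb{B}[x_1^{\pm1},\dots,x_n^{\pm1}]$ of degree $d+1$ such that $\underline{M}(I|_E)=M$, i.e. the restriction of the underlying matroid of $I$ to $E$ equals $M$.
   Context: $\mathbb{B}=\{\infty,0\}$ with $\oplus=\min$ and multiplication $+$; $\operatorname{supp}(f)$ is the set of exponents with coefficient $\neq\infty$. A tropical ideal $I\subset\mathbb{B}[x_1^{\pm1},\dots,x_n^{\pm1}]$ is an ideal such that for all $f,g\in I$ and $\mathbf u\in\operatorname{supp}(f)\cap\operatorname{supp}(g)$ there is $h\in I$ with $\operatorname{supp}(f)\Delta\operatorname{supp}(g)\subset\operatorname{supp}(h)\subset(\operatorname{supp}(f)\cup\operatorname{supp}(g))\setminus\{\mathbf u\}$. Its underlying matroid $\underline M(I)$ on $\mathbb{Z}^n$ has as independent sets those containing no support of a polynomial in $I$; $\underline M(I|_E)$ is its restriction to $E$ (circuits: supports of polynomials of $I$ that are minimal and contained in $E$). $I$ is zero-dimensional of degree $r$ iff $\underline M(I)$ has finite rank $r$; it is a paving tropical ideal if moreover all circuits of $\underline M(I)$ have size $r$ or $r+1$. A (possibly infinite, finitary) matroid of finite rank $r$ is paving if all its circuits have size $r$ or $r+1$. $E\subset\mathbb{Z}^n$ is $d$-sparse if there is no $\mathbf u\neq\mathbf 0$ with $|E\cap(\mathbf u+E)|\ge d$. *)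

(* Defs.v *)
From HB Require Import structures.
From mathcomp Require Import all_boot all_order all_algebra.
From mathcomp Require Import finmap.
Set Implicit Arguments. Unset Strict Implicit. Unset Printing Implicit Defensive.
Import Order.TTheory GRing.Theory Num.Theory.
Local Open Scope fset_scope.

Definition zvec (n : nat) := 'rV[int]_n.

(* A Laurent polynomial over the Boolean semifield B = {oo, 0} (min, +)
   is determined by its support: the coefficient of x^u is 0 iff u \in f,
   and oo otherwise.  So we identify B[x_1^{+-1},...,x_n^{+-1}] with the
   finite subsets of Z^n. The zero polynomial is fset0. *)
Definition Bpoly (n : nat) := {fset zvec n}.

Definition supp {n} (f : Bpoly n) : {fset zvec n} := f.

(* Tropical sum (coefficientwise min) and product:
   (f (+) g)_u = min(f_u, g_u),  (f (.) g)_u = min_{a+b=u} (f_a + g_b). *)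
Definition Badd {n} (f g : Bpoly n) : Bpoly n := f `|` g.
Definition Bmul {n} (f g : Bpoly n) : Bpoly n :=
  [fset (a + b)%R | a in f, b in g].

Definition is_ideal {n} (I : Bpoly n -> Prop) : Prop :=
  [/\ I fset0,
      (forall f g, I f -> I g -> I (Badd f g)) &
      (forall f g, I f -> I (Bmul g f))].

Definition tropical_ideal {n} (I : Bpoly n -> Prop) : Prop :=
  is_ideal I /\
  forall f g u, I f -> I g -> u \in supp f -> u \in supp g ->
    exists h, I h /\
      ((supp f `\` supp g) `|` (supp g `\` supp f)) `<=` supp h /\
      supp h `<=` (supp f `|` supp g) `\ u.

(* Underlying matroid of I on Z^n : a set is independent iff it contains
   no support of a (nonzero) polynomial of I.  (The zero polynomial has
   empty support, which is contained in every set, so it must be excluded.) *)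
Definition ul_indep {n} (I : Bpoly n -> Prop) (A : zvec n -> Prop) : Prop :=
  forall f, I f -> f != fset0 -> ~ (forall u, u \in supp f -> A u).

Definition ul_circuit {n} (I : Bpoly n -> Prop) (C : {fset zvec n}) : Prop :=
  (exists f, [/\ I f, f != fset0 & supp f = C]) /\
  forall g, I g -> g != fset0 -> ~ (supp g `<` C).

Definition ul_rank_eq {n} (I : Bpoly n -> Prop) (r : nat) : Prop :=
  (exists A : {fset zvec n}, ul_indep I (fun u => u \in A) /\ #|` A| = r) /\
  (forall A : {fset zvec n}, ul_indep I (fun u => u \in A) -> #|` A| <= r).

Definition zero_dim_deg {n} (I : Bpoly n -> Prop) (r : nat) : Prop :=
  tropical_ideal I /\ ul_rank_eq I r.

Definition paving_tropical_ideal {n} (I : Bpoly n -> Prop) (r : nat) : Prop :=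
  zero_dim_deg I r /\
  forall C, ul_circuit I C -> #|` C| = r \/ #|` C| = r.+1.

(* A (finitary) matroid of finite rank on a ground set E \subset Z^n.
   Since the rank is finite, all independent sets are finite, so it is
   given by its family of (finite) independent sets. *)
Record matroid_on {n} (E : zvec n -> Prop) := Matroid {
  m_indep : {fset zvec n} -> Prop;
  m_ground : forall A, m_indep A -> forall u, u \in A -> E u;
  m_indep0 : m_indep fset0;
  m_subset : forall A B, B `<=` A -> m_indep A -> m_indep B;
  m_augment : forall A B, m_indep A -> m_indep B -> #|` A| < #|` B| ->
                exists2 x, x \in B `\` A & m_indep (x |` A);
  m_bounded : exists r, forall A, m_indep A -> #|` A| <= r
}.

Definition m_rank_eq {n} {E : zvec n -> Prop} (M : matroid_on E) (r : nat) :=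
  (exists A, m_indep M A /\ #|` A| = r) /\
  (forall A, m_indep M A -> #|` A| <= r).

Definition m_circuit {n} {E : zvec n -> Prop} (M : matroid_on E)
  (C : {fset zvec n}) : Prop :=
  (forall u, u \in C -> E u) /\ ~ m_indep M C /\
  forall B, B `<` C -> m_indep M B.

Definition paving_matroid {n} {E : zvec n -> Prop} (M : matroid_on E)
  (r : nat) : Prop :=
  m_rank_eq M r /\ forall C, m_circuit M C -> #|` C| = r \/ #|` C| = r.+1.

Definition sparse {n} (d : nat) (E : zvec n -> Prop) : Prop :=
  ~ exists u : zvec n, u != 0%R /\
      exists S : {fset zvec n}, d <= #|` S| /\
        forall x, x \in S -> E x /\ E (x - u)%R.

Definition restriction_eq {n} (I : Bpoly n -> Prop) {E : zvec n -> Prop}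
  (M : matroid_on E) : Prop :=
  forall A : {fset zvec n},
    ((forall u, u \in A -> E u) /\ ul_indep I (fun u => u \in A)) <-> m_indep M A.

(* Main.v *)
Require Import Defs.
From HB Require Import structures.
From mathcomp Require Import all_boot all_order all_algebra.
From mathcomp Require Import finmap.
From mathcomp Require Import zify.
From Stdlib Require Import Classical ClassicalEpsilon.
Set Implicit Arguments. Unset Strict Implicit. Unset Printing Implicit Defensive.
Import GRing.Theory.
Local Open Scope fset_scope.

Lemma fsub_card_eq (T : choiceType) (A B : {fset T}) :
  A `<=` B -> #|`B| <= #|`A| -> A = B.
Proof. by move=> s c; apply/eqP; rewrite eqEfcard s c. Qed.

Lemma sub_of_card (T : choiceType) (A : {fset T}) k :
  k <= #|`A| -> exists B, B `<=` A /\ #|`B| = k.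
Proof.
elim: k => [|k IH] h; first by exists fset0; rewrite fsub0set cardfs0.
have [B [sB cB]] := IH (ltnW h).
have : ~~ (A `<=` B).
  by apply/negP=> /fsubset_leq_card; rewrite cB; move: h; clear; lia.
case/fsubsetPn=> x xA xB; exists (x |` B); split.
  by apply/fsubsetP=> y /fset1UP [->|/(fsubsetP sB)].
by rewrite cardfsU1 xB cB.
Qed.

Lemma card_swap (T : choiceType) (A : {fset T}) x y :
  y \in A -> x \notin A -> #|` x |` (A `\ y)| = #|`A|.
Proof.
move=> yA xA; rewrite cardfsU1 (cardfsD1 y A) yA in_fsetD1 (negbTE xA) andbF /=.
by [].
Qed.

Definition Qc (T : choiceType) (K : {fset T} -> Prop) (d : nat) (x : T) (A : {fset T}) :=
  (exists Tk, Tk `<=` x |` A /\ x \in Tk /\ K Tk) \/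
  (exists Y, Y `<=` A /\ #|`Y| = d.+1 /\ ~ K Y).

Definition Jc (T : choiceType) (K : {fset T} -> Prop) (d : nat) (f : {fset T}) :=
  forall x, x \in f -> Qc K d x (f `\ x).

Definition K3 (T : choiceType) (K : {fset T} -> Prop) (d : nat) :=
  forall T1 T2 Z, K T1 -> K T2 -> d <= #|`T1 `&` T2| -> Z `<=` T1 `|` T2 ->
    #|`Z| = d.+1 -> K Z.

Lemma Qc_mono (T : choiceType) K d (x : T) A B : A `<=` B -> Qc K d x A -> Qc K d x B.
Proof.
move=> sAB [[Tk [s [xT k]]]|[Y [s [c k]]]].
  left; exists Tk; split=> //; apply: (fsubset_trans s); exact: fsetUS.
right; exists Y; split=> //; exact: fsubset_trans s sAB.
Qed.

Lemma chain (T : choiceType) K d (B : {fset T}) u (hK : K3 K d)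
  (Ksz : forall Tk, K Tk -> #|`Tk| = d.+1) :
  (forall Y, Y `<=` B -> #|`Y| = d.+1 -> K Y) -> u \notin B ->
  forall T0, T0 `<=` u |` B -> u \in T0 -> K T0 ->
  forall Z, Z `<=` u |` B -> #|`Z| = d.+1 -> K Z.
Proof.
move=> full uB T0 sT0 uT0 KT0 Z sZ cZ.
case uZ: (u \in Z); last first.
  apply: full cZ; apply/fsubsetP=> y yZ; have := fsubsetP sZ y yZ.
  by case/fset1UP=> // ey; move: uZ; rewrite -ey yZ.
move: {2}#|`T0 `\` Z| (erefl #|`T0 `\` Z|) => k.
elim: k T0 sT0 uT0 KT0 => [|k IH] T0 sT0 uT0 KT0 ck.
  have s : T0 `<=` Z.
    apply/fsubsetP=> y yT; apply/negPn/negP=> yZ.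
    have : T0 `\` Z == fset0 by rewrite -cardfs_eq0 ck.
    by move/eqP/fsetP/(_ y); rewrite in_fsetD yZ yT inE.
  have -> : Z = T0.
    have := fsub_card_eq s; rewrite cZ (Ksz _ KT0) leqnn => h; by rewrite h .
  done.
have [v vD] : exists v, v \in T0 `\` Z.
  have : T0 `\` Z != fset0 by rewrite -cardfs_eq0 ck.
  by case/fset0Pn=> v vD; exists v.
move: (vD); rewrite in_fsetD => /andP [vZ vT0].
have nZT : ~~ (Z `<=` T0).
  apply/negP=> s; have e := fsub_card_eq s (_ : #|`T0| <= #|`Z|).
  by move: vZ; rewrite e ?cZ ?(Ksz _ KT0) // vT0.
case/fsubsetPn: nZT => w wZ wT0.
have wB : w \in B.
  by have := fsubsetP sZ w wZ; case/fset1UP=> // ew; move: wT0; rewrite ew uT0.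
have wu : w != u by apply/eqP=> e; move: wT0; rewrite e uT0.
have vu : v != u by apply/eqP=> e; move: vZ; rewrite e uZ.
set P := w |` (T0 `\ u).
have KP : K P.
  apply: full; last by rewrite card_swap // (Ksz _ KT0).
  apply/fsubsetP=> y /fset1UP [->//|]; rewrite in_fsetD1 => /andP [yu yT].
  by have := fsubsetP sT0 y yT; case/fset1UP=> // e; move: yu; rewrite e eqxx.
set T1 := w |` (T0 `\ v).
have KT1 : K T1.
  apply: (hK T0 P) => //.
  - have : T0 `\ u `<=` T0 `&` P.
      apply/fsubsetP=> y yT; rewrite in_fsetI (fsubsetP (fsubD1set _ _) _ yT).
      by rewrite /P fset1Ur.
    move/fsubset_leq_card; have := Ksz _ KT0.
    by rewrite (cardfsD1 u T0) uT0 add1n => -[->].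
  - apply/fsubsetP=> y /fset1UP [->|]; first by rewrite in_fsetU fset1U1 orbT.
    by rewrite in_fsetD1 in_fsetU => /andP [_ ->].
  - by rewrite card_swap // (Ksz _ KT0).
apply: (IH T1) => //.
- apply/fsubsetP=> y /fset1UP [->|]; first by rewrite fset1Ur.
  by rewrite in_fsetD1 => /andP [_ /(fsubsetP sT0)].
- by rewrite fset1Ur // in_fsetD1 eq_sym vu.
- have e : T1 `\` Z = (T0 `\` Z) `\ v.
    apply/fsetP=> y; rewrite !inE.
    case: (eqVneq y w) => [->|yw]; first by rewrite wZ !andbF.
    by case: (y \in Z); case: (y != v); case: (y \in T0).
  move: ck; rewrite (cardfsD1 v (T0 `\` Z)) vD e add1n; by case.
Qed.

Lemma closure (T : choiceType) K d (hK : K3 K d)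
  (Ksz : forall Tk, K Tk -> #|`Tk| = d.+1) (B : {fset T}) u x :
  u \notin B -> x \notin B -> x != u -> Qc K d u B -> Qc K d x (u |` B) ->
  Qc K d x B.
Proof.
move=> uB xB xu [[T0 [s0 [u0 k0]]]|Yc]; last by right.
case: (classic (exists Y, Y `<=` B /\ #|`Y| = d.+1 /\ ~ K Y)) => [h|h]; first by right.
have full : forall Y, Y `<=` B -> #|`Y| = d.+1 -> K Y.
  move=> Y sY cY; apply: NNPP => nK; apply: h; exists Y; done.
have fullu := chain hK Ksz full uB s0 u0 k0.
case=> [[T' [s' [x' k']]]|[Y' [s' [c' k']]]]; last by case: k'; apply: fullu.
case uT': (u \in T').
  have [w wB wT'] : exists2 w, w \in B & w \notin T'.
    apply/fsubsetPn/negP=> sBT.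
    have : x |` (u |` B) `<=` T'.
      by apply/fsubsetP=> y /fset1UP [->//|/fset1UP [->//|/(fsubsetP sBT)]].
    move/fsubset_leq_card; rewrite (Ksz _ k') !cardfsU1 uB !inE (negbTE xB) (negbTE xu) /=.
    have : T0 `\ u `<=` B.
      apply/fsubsetP=> y; rewrite in_fsetD1 => /andP [yu /(fsubsetP s0)].
      by case/fset1UP=> // e; move: yu; rewrite e eqxx.
    move/fsubset_leq_card; have := Ksz _ k0; rewrite (cardfsD1 u T0) u0.
    move=> h1 h2 h3; lia.
  have wu : w != u by apply/eqP=> e; move: wB; rewrite e (negbTE uB).
  have wx : w != x by apply/eqP=> e; move: wB; rewrite e (negbTE xB).
  set Z := w |` (T' `\ x).
  have KZ : K Z.
    apply: fullu; last by rewrite card_swap // (Ksz _ k').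
    apply/fsubsetP=> y /fset1UP [->|]; first by rewrite fset1Ur.
    rewrite in_fsetD1 => /andP [yx /(fsubsetP s')] /fset1UP [e|//].
    by move: yx; rewrite e eqxx.
  set R := w |` (T' `\ u).
  have KR : K R.
    apply: (hK T' Z) => //.
    - have : T' `\ x `<=` T' `&` Z.
        apply/fsubsetP=> y yT; rewrite in_fsetI (fsubsetP (fsubD1set _ _) _ yT).
        by rewrite /Z fset1Ur.
      move/fsubset_leq_card; have := Ksz _ k'.
      by rewrite (cardfsD1 x T') x' add1n => -[->].
    - apply/fsubsetP=> y /fset1UP [->|]; first by rewrite in_fsetU fset1U1 orbT.
      by rewrite in_fsetD1 in_fsetU => /andP [_ ->].
    - by rewrite card_swap // (Ksz _ k').
  left; exists R; split; last split=> //.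
    apply/fsubsetP=> y /fset1UP [->|]; first by rewrite !fset1Ur.
    rewrite in_fsetD1 => /andP [yu /(fsubsetP s')] /fset1UP [->|]; first by rewrite fset1U1.
    by case/fset1UP=> [e|yB]; [move: yu; rewrite e eqxx | rewrite fset1Ur].
  by rewrite fset1Ur // in_fsetD1 xu.
left; exists T'; split=> //; apply/fsubsetP=> y yT.
have := fsubsetP s' y yT; case/fset1UP=> [->|/fset1UP [e|yB]]; first by rewrite fset1U1.
  by move: uT'; rewrite -e yT.
by rewrite fset1Ur.
Qed.

Lemma KJ (T : choiceType) K d (Tk : {fset T}) : K Tk -> Jc K d Tk.
Proof.
move=> k y yT; left; exists Tk; split=> //; by rewrite fsetD1K.
Qed.

Lemma QJ (T : choiceType) K d (hK : K3 K d)
  (Ksz : forall Tk, K Tk -> #|`Tk| = d.+1) (x : T) A :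
  x \notin A -> Qc K d x A -> exists C, C `<=` x |` A /\ x \in C /\ Jc K d C.
Proof.
move=> xA Q.
case: (classic (exists Tk, Tk `<=` x |` A /\ x \in Tk /\ K Tk)) => [[Tk [s [xT k]]]|h].
  by exists Tk; split=> //; split=> //; apply: KJ.
case: Q => [//|[Y [sY [cY kY]]]].
have xY : x \notin Y by apply/negP=> /(fsubsetP sY); rewrite (negbTE xA).
exists (x |` Y); split; first exact: fsetUS.
split; first exact: fset1U1.
move=> y /fset1UP [->|yY].
  by right; exists Y; rewrite fsetU1K.
right; exists ((x |` Y) `\ y); split=> //; split.
  have := cardfsD1 y (x |` Y); rewrite fset1Ur // cardfsU1 xY cY add1n; by case.
move=> kC; apply: h; exists ((x |` Y) `\ y); split.
  apply/fsubsetP=> z; rewrite in_fsetD1 => /andP [_ /fset1UP [->|/(fsubsetP sY)]].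
    exact: fset1U1.
  exact: fset1Ur.
split=> //; rewrite in_fsetD1 fset1U1 andbT.
by apply/eqP=> e; move: xY; rewrite e yY.
Qed.

Lemma Jlocal (T : choiceType) K d (h : {fset T}) :
  (forall x, x \in h -> exists C, C `<=` h /\ x \in C /\ Jc K d C) -> Jc K d h.
Proof.
move=> H x xh; have [C [sC [xC JC]]] := H x xh.
apply: Qc_mono (JC x xC); exact: fsetSD.
Qed.

Lemma Jsize (T : choiceType) K d (Ksz : forall Tk, K Tk -> #|`Tk| = d.+1)
  (f : {fset T}) : Jc K d f -> f != fset0 -> d.+1 <= #|`f|.
Proof.
move=> Jf /fset0Pn [x xf]; case: (Jf x xf) => [[Tk [s [_ k]]]|[Y [s [c _]]]].
  by rewrite fsetD1K // in s; rewrite -(Ksz _ k); apply: fsubset_leq_card.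
move/fsubset_leq_card: s; rewrite c (cardfsD1 x f) xf => h; lia.
Qed.

Lemma L2 (T : choiceType) K d (hK : K3 K d)
  (Ksz : forall Tk, K Tk -> #|`Tk| = d.+1) (A : {fset T}) :
  d.+2 <= #|`A| -> exists f, f `<=` A /\ f != fset0 /\ Jc K d f.
Proof.
move=> cA.
have [x xA] : exists x, x \in A.
  have : A != fset0 by rewrite -cardfs_gt0; lia.
  by case/fset0Pn=> x xA; exists x.
have [Y0 [sY cY]] : exists Y0, Y0 `<=` A `\ x /\ #|`Y0| = d.+1.
  apply: sub_of_card; move: cA; rewrite (cardfsD1 x A) xA => h; lia.
case: (classic (K Y0)) => kY.
  exists Y0; split; first exact: (fsubset_trans sY (fsubD1set _ _)).
  split; last exact: KJ.
  by rewrite -cardfs_gt0 cY.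
have Q : Qc K d x (A `\ x) by right; exists Y0.
have [C [sC [xC JC]]] := QJ hK Ksz (negbT (fsetD11 x A)) Q.
exists C; split; first by rewrite fsetD1K in sC.
split=> //; by apply/fset0Pn; exists x.
Qed.

Definition pb (P : Prop) : bool := if excluded_middle_informative P then true else false.
Lemma pbP (P : Prop) : pb P <-> P.
Proof. by rewrite /pb; case: excluded_middle_informative. Qed.

Lemma elim_half (T : choiceType) K d (hK : K3 K d)
  (Ksz : forall Tk, K Tk -> #|`Tk| = d.+1) (f g : {fset T}) u z :
  Jc K d f -> Jc K d g -> u \in g -> z \in f -> z \notin g ->
  exists C, C `<=` (f `|` g) `\ u /\ z \in C /\ Jc K d C.
Proof.
move=> Jf Jg ug zf zg.
have zu : z != u by apply/eqP=> e; move: zg; rewrite e ug.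
set B := ((f `|` g) `\ u) `\ z.
have uB : u \notin B by rewrite !inE eqxx andbF.
have zB : z \notin B by rewrite !inE eqxx.
have Qz : Qc K d z (u |` B).
  apply: Qc_mono (Jf z zf); apply/fsubsetP=> y; rewrite in_fsetD1 => /andP [yz yf].
  case: (eqVneq y u) => [->|yu]; first exact: fset1U1.
  by apply: fset1Ur; rewrite !inE yz yu yf.
have Qu : Qc K d u B.
  apply: Qc_mono (Jg u ug); apply/fsubsetP=> y; rewrite in_fsetD1 => /andP [yu yg].
  have yz : y != z by apply/eqP=> e; move: zg; rewrite -e yg.
  by rewrite !inE yz yu yg orbT.
have QzB := closure hK Ksz uB zB zu Qu Qz.
have [C [sC [zC JC]]] := QJ hK Ksz zB QzB.
exists C; split=> //; apply: (fsubset_trans sC); rewrite fsetD1K //.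
by rewrite !inE zu zf.
Qed.

Lemma Jelim (T : choiceType) K d (hK : K3 K d)
  (Ksz : forall Tk, K Tk -> #|`Tk| = d.+1) (f g : {fset T}) u :
  Jc K d f -> Jc K d g -> u \in f -> u \in g ->
  exists h, Jc K d h /\
    ((f `\` g) `|` (g `\` f)) `<=` h /\ h `<=` (f `|` g) `\ u.
Proof.
move=> Jf Jg uf ug.
set W := (f `|` g) `\ u.
set h := [fset z in W | pb (exists C, C `<=` W /\ z \in C /\ Jc K d C)].
have hP : forall z, z \in h <-> z \in W /\ exists C, C `<=` W /\ z \in C /\ Jc K d C.
  move=> z; rewrite /h !inE /=; split.
    by case/andP=> -> /pbP.
  by case=> -> /pbP ->.
exists h; split.
  apply: Jlocal => z /hP [_ [C [sC [zC JC]]]]; exists C; split=> //.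
  apply/fsubsetP=> y yC; apply/hP; split; first exact: (fsubsetP sC).
  by exists C.
split.
  apply/fsubsetP=> z; rewrite in_fsetU !in_fsetD => /orP [/andP [zg zf]|/andP [zf zg]].
    have [C [sC [zC JC]]] := elim_half hK Ksz Jf Jg ug zf zg.
    by apply/hP; split; [exact: (fsubsetP sC) | exists C].
  have [C [sC [zC JC]]] := elim_half hK Ksz Jg Jf uf zg zf.
  rewrite fsetUC in sC.
  by apply/hP; split; [exact: (fsubsetP sC) | exists C].
by apply/fsubsetP=> z /hP [].
Qed.

Definition shift n (A : {fset zvec n}) (a : zvec n) : {fset zvec n} :=
  [fset (x + a)%R | x in A].

Lemma in_shift n (A : {fset zvec n}) a y : (y \in shift A a) = ((y - a)%R \in A).
Proof.
apply/imfsetP/idP => [[x xA ->]|h]; first by rewrite addrK.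
by exists (y - a)%R => //; rewrite subrK.
Qed.

Lemma card_shift n (A : {fset zvec n}) a : #|` shift A a| = #|`A|.
Proof. by rewrite card_imfset //=; apply: addIr. Qed.

Definition Kz n d (E : zvec n -> Prop) (M : matroid_on E) (T : {fset zvec n}) : Prop :=
  #|`T| = d.+1 /\ exists t (C : {fset zvec n}),
    (forall y, y \in T <-> (y - t)%R \in C) /\ (forall z, z \in C -> E z) /\ ~ m_indep M C.

Lemma Kz_shift n d E (M : matroid_on E) (T : {fset zvec n}) a :
  Kz d M T -> Kz d M (shift T a).
Proof.
case=> cT [t [C [hT [hE hD]]]]; split; first by rewrite card_shift.
exists (t + a)%R, C; split=> // y; rewrite in_shift hT.
by rewrite opprD addrA -[(y - a - t)%R]addrA [(- a - t)%R]addrC addrA.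
Qed.

Lemma mincirc n (E : zvec n -> Prop) (M : matroid_on E) (A : {fset zvec n}) :
  (forall u, u \in A -> E u) -> ~ m_indep M A -> exists C, C `<=` A /\ m_circuit M C.
Proof.
have : forall k (A : {fset zvec n}), #|`A| <= k ->
   (forall u, u \in A -> E u) -> ~ m_indep M A -> exists C, C `<=` A /\ m_circuit M C.
  elim=> [|k IH] A0 cA hE hD.
    exists A0; split=> //; split=> //; split=> // B pB.
    by have := fproper_ltn_card pB; lia.
  case: (classic (forall B, B `<` A0 -> m_indep M B)) => [h|h].
    by exists A0; split=> //; split.
  have [B [pB dB]] : exists B, B `<` A0 /\ ~ m_indep M B.
    by apply: NNPP => nh; apply: h => B pB; apply: NNPP => nB; apply: nh; exists B.
  have sB := fproper_sub pB.
  have cB : #|`B| <= k by have := fproper_ltn_card pB; lia.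
  have [C [sC cC]] := IH B cB (fun u uB => hE u (fsubsetP sB u uB)) dB.
  by exists C; split=> //; exact: fsubset_trans sC sB.
by move=> H; apply: H.
Qed.

Lemma small_indep n d (E : zvec n -> Prop) (M : matroid_on E) (A : {fset zvec n}) :
  paving_matroid M d.+1 -> (forall u, u \in A -> E u) -> #|`A| <= d -> m_indep M A.
Proof.
move=> [_ pav] hE cA; apply: NNPP => hD.
have [C [sC cC]] := mincirc hE hD.
have := fsubset_leq_card sC; case: (pav C cC) => ->; lia.
Qed.

Lemma shift_eq n (T C : {fset zvec n}) t :
  (forall y, y \in T <-> (y - t)%R \in C) -> C = shift T (- t)%R.
Proof.
move=> h; apply/fsetP=> z; rewrite in_shift opprK.
apply/idP/idP => [zC|/h]; last by rewrite addrK.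
by apply/h; rewrite addrK.
Qed.

Lemma aug_contra n d (E : zvec n -> Prop) (M : matroid_on E) (J C : {fset zvec n}) x :
  J `<=` C -> x \in C -> x \notin J -> #|`J| = d -> #|`C| = d.+1 -> ~ m_indep M C ->
  m_indep M (x |` J) -> False.
Proof.
move=> sJ xC xJ cJ cC dC iX; apply: dC.
have s : x |` J `<=` C by apply/fsubsetP=> y /fset1UP [->//|/(fsubsetP sJ)].
have e := fsub_card_eq s; rewrite cardfsU1 xJ cJ cC leqnn in e.
by rewrite -e.
Qed.

Lemma Kz_K3 n d (E : zvec n -> Prop) (M : matroid_on E) :
  sparse d E -> paving_matroid M d.+1 -> K3 (Kz d M) d.
Proof.
move=> sp pav T1 T2 Z [c1 [t1 [C1 [h1 [e1 d1]]]]] [c2 [t2 [C2 [h2 [e2 d2]]]]] cI sZ cZ.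
case: (eqVneq t1 t2) => [et|nt]; last first.
  exfalso; apply: sp; exists (t2 - t1)%R; split; first by rewrite subr_eq0 eq_sym.
  exists (shift (T1 `&` T2) (- t1)%R); rewrite card_shift; split=> // x.
  rewrite in_shift opprK in_fsetI => /andP [x1 x2]; split.
    by apply: e1; move/h1: x1; rewrite addrK.
  apply: e2; move/h2: x2; by rewrite opprB addrA.
subst t2; set t := t1.
split=> //; exists t, (shift Z (- t)%R); split.
  by move=> y; rewrite in_shift opprK subrK.
split.
  move=> z; rewrite in_shift opprK => /(fsubsetP sZ); rewrite in_fsetU.
  by case/orP=> [/h1|/h2]; rewrite addrK; [apply: e1 | apply: e2].
move=> iC.
have eC1 := shift_eq h1; have eC2 := shift_eq h2.
have cC1 : #|`C1| = d.+1 by rewrite eC1 card_shift.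
have cC2 : #|`C2| = d.+1 by rewrite eC2 card_shift.
set J := shift (T1 `&` T2) (- t)%R.
have sJ1 : J `<=` C1.
  by apply/fsubsetP=> z; rewrite in_shift opprK in_fsetI => /andP [/h1]; rewrite addrK.
have sJ2 : J `<=` C2.
  by apply/fsubsetP=> z; rewrite in_shift opprK in_fsetI => /andP [_ /h2]; rewrite addrK.
have [J' [sJ' cJ']] : exists J', J' `<=` J /\ #|`J'| = d.
  by apply: sub_of_card; rewrite card_shift.
have iJ' : m_indep M J'.
  apply: (small_indep pav) => [u uJ|]; last by rewrite cJ'.
  by apply: e1; apply: (fsubsetP sJ1); apply: (fsubsetP sJ').
have cJZ : #|`J'| < #|`shift Z (- t)%R| by rewrite card_shift cJ' cZ.
have [x xD ix] := m_augment iJ' iC cJZ.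
  move: xD; rewrite in_fsetD => /andP [xJ].
  rewrite in_shift opprK => /(fsubsetP sZ); rewrite in_fsetU.
  case/orP=> [/h1|/h2]; rewrite addrK => xC.
    exact: (aug_contra (fsubset_trans sJ' sJ1) xC xJ cJ' cC1 d1 ix).
  exact: (aug_contra (fsubset_trans sJ' sJ2) xC xJ cJ' cC2 d2 ix).
Qed.

Lemma J_shift n d E (M : matroid_on E) (f : {fset zvec n}) a :
  Jc (Kz d M) d f -> Jc (Kz d M) d (shift f a).
Proof.
move=> Jf z; rewrite in_shift => zf.
case: (Jf _ zf) => [[Tk [s [xT k]]]|[Y [s [c k]]]].
  left; exists (shift Tk a); split; last by split; [rewrite in_shift | exact: Kz_shift].
  apply/fsubsetP=> y; rewrite in_shift => /(fsubsetP s) /fset1UP [e|].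
    by move/(congr1 (fun w => (w + a)%R)): e; rewrite !subrK => ->; exact: fset1U1.
  rewrite in_fsetD1 => /andP [ne yf]; apply: fset1Ur; rewrite in_fsetD1 in_shift yf andbT.
  by apply: contraNneq ne => ->.
right; exists (shift Y a); split; last split.
- apply/fsubsetP=> y; rewrite in_shift => /(fsubsetP s).
  rewrite in_fsetD1 => /andP [ne yf]; rewrite in_fsetD1 in_shift yf andbT.
  by apply: contraNneq ne => ->.
- by rewrite card_shift.
- move=> kY; apply: k; have := Kz_shift (- a)%R kY.
  have -> // : shift (shift Y a) (- a)%R = Y.
  by apply/fsetP=> y; rewrite !in_shift opprK addrK.
Qed.

Lemma indep_noJ n d E (M : matroid_on E) (A f : {fset zvec n}) :
  sparse d E -> paving_matroid M d.+1 -> m_indep M A ->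
  Jc (Kz d M) d f -> f != fset0 -> f `<=` A -> False.
Proof.
move=> sp [[_ rk] _] iA Jf nf sf.
have cA := rk A iA.
case/fset0Pn: nf => x xf.
case: (Jf x xf) => [[Tk [s [xT [cT [t [C [h [e dC]]]]]]]]|[Y [s [c k]]]].
  have sTA : Tk `<=` A by rewrite fsetD1K // in s; exact: fsubset_trans s sf.
  case: (eqVneq t 0%R) => [t0|tn].
    apply: dC; apply: (m_subset _ iA); apply/fsubsetP=> y yC.
    by apply: (fsubsetP sTA); apply/h; rewrite t0 subr0.
  apply: sp; exists t; split=> //; exists Tk; rewrite cT; split=> // y yT.
  split; first by apply: (m_ground iA); apply: (fsubsetP sTA).
  by apply: e; apply/h.
have : Y `<=` A `\ x by apply: fsubset_trans s (fsetSD _ sf).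
move/fsubset_leq_card; rewrite c; move: cA; rewrite (cardfsD1 x A) (fsubsetP sf x xf).
move=> h1 h2; lia.
Qed.

Close Scope fset_scope.

Unset Implicit Arguments.
Theorem mainTheorem9 (n d : nat) (E : zvec n -> Prop) (M : matroid_on E) :
  1 <= d -> sparse d E -> paving_matroid M d.+1 ->
  exists I : Bpoly n -> Prop,
    paving_tropical_ideal I d.+1 /\ restriction_eq I M.
Proof.
move=> d1 sp pav.
have hK := Kz_K3 sp pav.
have Ksz : forall Tk, Kz d M Tk -> #|`Tk| = d.+1 by move=> Tk [].
exists (Jc (Kz d M) d).
have ulI : forall A : {fset zvec n}, ul_indep (Jc (Kz d M) d) (fun u => u \in A) ->
    ~ (exists f, (f `<=` A)%fset /\ f != fset0 /\ Jc (Kz d M) d f).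
  move=> A hI [f [sf [nf Jf]]]; apply: (hI f Jf nf) => u; exact: (fsubsetP sf).
split; last first.
  move=> A; split.
    case=> hE hI; apply: NNPP => hD.
    have [C [sC cC]] := mincirc hE hD.
    have [[_ rk] pv] := pav.
    case: (pv C cC) => c.
      apply: (ulI A hI); exists C; split=> //; split.
        by rewrite -cardfs_gt0 c.
      apply: KJ; split=> //; exists 0%R, C; split; first by move=> y; rewrite subr0.
      by case: cC => h1 [h2 _].
    have c' : d.+2 <= #|`C| by rewrite c.
    have [f [sf [nf Jf]]] := L2 hK Ksz c'.
    by apply: (ulI A hI); exists f; split=> //; exact: (fsubset_trans sf sC).
  move=> iA; split; first exact: (m_ground iA).
  move=> f Jf nf sf; apply: (indep_noJ sp pav iA Jf nf); exact/fsubsetP.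
split; last first.
  move=> C [[f [Jf nf ef]] mn]; rewrite /supp in ef; subst C.
  have c1 := Jsize Ksz Jf nf.
  case: (leqP #|`f| d.+2) => c2; first by lia.
  exfalso; case/fset0Pn: (nf) => x xf.
  have c3 : d.+2 <= #|`f `\ x|%fset by move: c2; rewrite (cardfsD1 x f) xf; lia.
  have [g [sg [ng Jg]]] := L2 hK Ksz c3.
  apply: (mn g Jg ng); rewrite /supp fproperE (fsubset_trans sg (fsubD1set _ _)) /=.
    apply/negP=> /fsubsetP/(_ x xf) xg.
  by have := fsubsetP sg x xg; rewrite in_fsetD1 eqxx.
split; last first.
  split.
    have [[B [iB cB]] _] := pav.1.
    exists B; split=> // f Jf nf sf; apply: (indep_noJ sp pav iB Jf nf); exact/fsubsetP.
  move=> A hI; rewrite leqNgt; apply/negP=> cA.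
  by apply: (ulI A hI); apply: L2 hK Ksz _ cA.
split.
  split.
    by move=> x; rewrite inE.
    move=> f g Jf Jg; apply: Jlocal => x; rewrite /Badd in_fsetU => /orP [xf|xg].
      by exists f; split=> //; exact: fsubsetUl.
    by exists g; split=> //; exact: fsubsetUr.
  move=> f g Jf; apply: Jlocal => z /imfset2P [a ag [b bf ->]].
  exists (shift f a); split; last split.
  - apply/fsubsetP=> y; rewrite in_shift => yf.
    by rewrite -(subrK a y) addrC; apply: in_imfset2.
  - by rewrite in_shift [(a + b)%R]addrC addrK.
  - exact: J_shift.
move=> f g u Jf Jg uf ug; rewrite /supp; have := Jelim hK Ksz Jf Jg uf ug. by case=> h [h1 h2]; exists h.
Qed.
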